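(* Let $n,m\ge1$ and let $v=(v_1,\dots,v_m)$ with $v_j\in\mathbb R^n$ be indeterminates (so $mn$ real coordinates). Let $(a_{ij})$ be a real $n\times m$ matrix of rank $n$, and $t_i=\sum_ja_{ij}v_j$ ($i=1,\dots,n$). Let $b_1,\dots,b_n$ be real linear combinations of the scalar products $(v_h,v_k)$. Let $d(v)$ be the determinant of the $n\times n$ matrix with rows $t_1,\dots,t_n$, and let $x=(f_1/d,\dots,f_n/d)$ (with $f_i$ polynomials in $v$) be the solution, given by Cramer's rule, of the linear system $(x,t_i)=b_i$, $i=1,\dots,n$. Assume there exist $a=\sum_jc_jv_j$ with $c_j\in\mathbb R$ and $b$ a real linear combination of the $(v_h,v_k)$ such that $$|x|^2+(x,a)+b=0$$ identically in $v$. Then $x$ is a polynomial in the coordinates of $v$, i.e. $d$ divides each $f_i$.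
   Context: $(\cdot,\cdot)$ denotes the standard scalar product on $\mathbb R^n$ and $|x|^2=(x,x)$. *)

(* Defs.v *)
From HB Require Import structures.
From mathcomp Require Import all_boot all_order all_algebra.
Set Implicit Arguments. Unset Strict Implicit. Unset Printing Implicit Defensive.
Import Order.TTheory GRing.Theory Num.Theory.
Local Open Scope ring_scope.

(* The indeterminates v_1..v_m in R^n are the rows of V : 'M_(m,n). *)

Inductive polyfun (R : ringType) (m n : nat) : ('M[R]_(m, n) -> R) -> Prop :=
| pf_const (c : R) : polyfun (fun _ => c)
| pf_coord (j : 'I_m) (k : 'I_n) : polyfun (fun V => V j k)
| pf_add f g : polyfun f -> polyfun g -> polyfun (fun V => f V + g V)
| pf_mul f g : polyfun f -> polyfun g -> polyfun (fun V => f V * g V).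

Definition dotr (R : ringType) (n : nat) (x y : 'rV[R]_n) : R := (x *m y^T) 0 0.

Definition gram (R : ringType) (m n : nat) (V : 'M[R]_(m, n)) : 'M[R]_m := V *m V^T.

Definition qlin (R : ringType) (m n : nat) (beta : 'M[R]_m) (V : 'M[R]_(m, n)) : R :=
  \sum_(h < m) \sum_(k < m) beta h k * gram V h k.

Definition tmat (R : ringType) (n m : nat) (A : 'M[R]_(n, m)) (V : 'M[R]_(m, n)) : 'M[R]_n :=
  A *m V.

(* Cramer numerator f_i for the system (x, t_r) = b_r, b_r = qlin (Bs r) V *)
Definition cramer_num (R : comRingType) (n m : nat) (A : 'M[R]_(n, m))
  (Bs : 'I_n -> 'M[R]_m) (V : 'M[R]_(m, n)) (i : 'I_n) : R :=
  \det (\matrix_(r < n, s < n) (if s == i then qlin (Bs r) V else tmat A V r s)).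

Definition solx (R : fieldType) (n m : nat) (A : 'M[R]_(n, m))
  (Bs : 'I_n -> 'M[R]_m) (V : 'M[R]_(m, n)) : 'rV[R]_n :=
  \row_(i < n) (cramer_num A Bs V i / \det (tmat A V)).

(* Main.v *)
Require Import Defs.
From HB Require Import structures.
From mathcomp Require Import all_boot all_order all_algebra.
From Stdlib Require Import FunctionalExtensionality.
Set Implicit Arguments. Unset Strict Implicit. Unset Printing Implicit Defensive.
Import Order.TTheory GRing.Theory Num.Theory.
Local Open Scope ring_scope.

Lemma pf_ext (R : ringType) m n (f g : 'M[R]_(m,n) -> R) :
  polyfun f -> f =1 g -> polyfun g.
Proof. by move=> pf /functional_extensionality <-. Qed.

Lemma pf_sum (R : ringType) m n I (r : seq I) (P : pred I) (F : I -> 'M[R]_(m,n) -> R) :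
  (forall i, polyfun (F i)) -> polyfun (fun V => \sum_(i <- r | P i) F i V).
Proof.
move=> HF; elim: r => [|x r IH].
  by apply: (pf_ext (pf_const _ _ 0)) => V; rewrite big_nil.
case: (boolP (P x)) => Px.
  by apply: (pf_ext (pf_add (HF x) IH)) => V; rewrite big_cons Px.
by apply: (pf_ext IH) => V; rewrite big_cons (negPf Px).
Qed.

Lemma pf_prod (R : ringType) m n I (r : seq I) (P : pred I) (F : I -> 'M[R]_(m,n) -> R) :
  (forall i, polyfun (F i)) -> polyfun (fun V => \prod_(i <- r | P i) F i V).
Proof.
move=> HF; elim: r => [|x r IH].
  by apply: (pf_ext (pf_const _ _ 1)) => V; rewrite big_nil.
case: (boolP (P x)) => Px.
  by apply: (pf_ext (pf_mul (HF x) IH)) => V; rewrite big_cons Px.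
by apply: (pf_ext IH) => V; rewrite big_cons (negPf Px).
Qed.

Lemma pf_det (R : comRingType) m n k (M : 'M[R]_(m,n) -> 'M[R]_k) :
  (forall i j, polyfun (fun V => M V i j)) -> polyfun (fun V => \det (M V)).
Proof.
move=> HM; rewrite /determinant.
apply: pf_sum => s; apply: pf_mul; first exact: pf_const.
by apply: pf_prod => i; apply: HM.
Qed.

Lemma pf_line (R : comRingType) m n (f : 'M[R]_(m,n) -> R) : polyfun f ->
  forall V Z, exists p : {poly R}, forall s, f (V + s *: Z) = p.[s].
Proof.
move=> pf V Z; elim: pf => [c|j k|f1 g1 _ [p Hp] _ [q Hq]|f1 g1 _ [p Hp] _ [q Hq]].
- by exists c%:P => s; rewrite hornerC.
- by exists ((V j k)%:P + (Z j k)%:P * 'X) => s; rewrite !mxE hornerD hornerMX !hornerC mulrC.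
- by exists (p + q) => s; rewrite hornerD Hp Hq.
- by exists (p * q) => s; rewrite hornerM Hp Hq.
Qed.
Lemma poly_all0 (R : numDomainType) (p : {poly R}) : (forall x, p.[x] = 0) -> p = 0.
Proof.
move=> H; apply: (@roots_geq_poly_eq0 _ p [seq i%:R | i <- iota 0 (size p)]).
- by apply/allP => x /mapP [i _ ->]; apply/rootP.
- by rewrite map_inj_uniq ?iota_uniq // => i j /eqP; rewrite eqr_nat => /eqP.
- by rewrite size_map size_iota.
Qed.

Lemma poly_ae0 (R : numDomainType) (p q : {poly R}) : q != 0 ->
  (forall x, q.[x] != 0 -> p.[x] = 0) -> p = 0.
Proof.
move=> q0 H; have : p * q = 0.
  apply: poly_all0 => x; rewrite hornerM; have [->|qx] := eqVneq q.[x] 0.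
    by rewrite mulr0.
  by rewrite H // mul0r.
by move/eqP; rewrite mulf_eq0 (negPf q0) orbF => /eqP.
Qed.

Lemma rootX0 (R : idomainType) (p : {poly R}) : p.[0] = 0 -> exists q, p = 'X * q.
Proof.
move=> /rootP /factor_theorem [q ->]; exists q.
by rewrite polyC0 subr0 mulrC.
Qed.

Lemma poly_Xfactor (R : idomainType) (p : {poly R}) : p != 0 ->
  exists k e, p = 'X^k * e /\ e.[0] != 0.
Proof.
move: {2}(size p) (leqnn (size p)) => N; elim: N p => [|N IH] p Hs p0.
  by move: Hs; rewrite leqn0 size_poly_eq0 (negPf p0).
have [p00|p00] := eqVneq p.[0] 0; last by exists 0%N, p; rewrite expr0 mul1r.
case: (rootX0 p00) => q Dp.
have q0 : q != 0 by apply: contraNneq p0 => q0; rewrite Dp q0 mulr0.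
have : (size q <= N)%N.
  by move: Hs; rewrite Dp mulrC size_mulX // ltnS.
move=> /(IH q) => /(_ q0) [k [e [De e0]]]; exists k.+1, e; split=> //.
by rewrite Dp De exprS mulrA.
Qed.
Lemma cramer_adj (R : comRingType) n m (A : 'M[R]_(n,m)) Bs V i :
  cramer_num A Bs V i = (\adj (tmat A V) *m \col_r qlin (Bs r) V) i 0.
Proof.
rewrite /cramer_num (expand_det_col _ i) !mxE; apply: eq_bigr => r _.
rewrite !mxE eqxx mulrC; congr (_ * _).
rewrite /cofactor; congr (_ * \det _); apply/matrixP => a c; rewrite !mxE.
by rewrite eq_sym (negPf (neq_lift _ _)).
Qed.

Lemma cramer_mul (R : comRingType) n m (A : 'M[R]_(n,m)) Bs V :
  tmat A V *m (\col_i cramer_num A Bs V i) = \det (tmat A V) *: \col_r qlin (Bs r) V.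
Proof.
have -> : \col_i cramer_num A Bs V i = \adj (tmat A V) *m \col_r qlin (Bs r) V.
  by apply/matrixP => i j; rewrite mxE cramer_adj ord1.
by rewrite mulmxA mul_mx_adj mul_scalar_mx.
Qed.

Lemma cramer_sol (R : comRingType) n m (A : 'M[R]_(n,m)) Bs V (z : 'cV[R]_n) :
  \col_r qlin (Bs r) V = tmat A V *m z -> forall i,
  cramer_num A Bs V i = \det (tmat A V) * z i 0.
Proof.
move=> Hb i; rewrite cramer_adj Hb mulmxA mul_adj_mx mul_scalar_mx.
by rewrite mxE.
Qed.
Lemma sos_Xpow (R : realFieldType) n (Cp : 'I_n -> {poly R}) (Q E : {poly R}) k :
  forall F : 'I_n -> {poly R},
  \sum_i F i ^+ 2 + 'X^k * E * \sum_i F i * Cp i + ('X^k * E) ^+ 2 * Q = 0 ->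
  forall i, exists G, F i = 'X^k * G.
Proof.
elim: k => [|k IH] F H.
  by move=> i; exists (F i); rewrite expr0 mul1r.
have F0 : forall i, (F i).[0] = 0.
  have : (\sum_i F i ^+ 2).[0] = 0.
    move/(congr1 (fun p => p.[0])): H.
    rewrite !hornerE expr0n /=. by rewrite !mul0r expr0n /= !mul0r !addr0.
  rewrite horner_sum => /psumr_eq0P H0 i; apply/eqP; rewrite -sqrf_eq0.
  by rewrite -horner_exp H0 // => j _; rewrite horner_exp sqr_ge0.
have /fin_all_exists [G HG] : forall i, exists G, F i = 'X * G.
  by move=> i; apply: rootX0.
have H2 : 'X ^+ 2 * (\sum_i G i ^+ 2 + 'X^k * E * \sum_i G i * Cp i
           + ('X^k * E) ^+ 2 * Q) = 0.
  apply: eq_trans H; rewrite !mulrDr; congr (_ + _ + _).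
  - by rewrite big_distrr; apply: eq_bigr => i _; rewrite HG exprMn.
  - have -> : \sum_i F i * Cp i = 'X * \sum_i G i * Cp i.
      by rewrite big_distrr; apply: eq_bigr => i _; rewrite HG /= mulrA.
    by rewrite expr2 exprS !mulrA; congr (_ * _); rewrite -!mulrA; congr (_ * _); rewrite mulrC -!mulrA.
  - by rewrite (exprS 'X k) !exprMn !mulrA.
move: H2 => /eqP; rewrite mulf_eq0 expf_eq0 /= polyX_eq0 /= => /eqP H2.
move=> i; case: (IH G H2 i) => G' HG'; exists G'.
by rewrite HG HG' exprS mulrA.
Qed.

Lemma pf_tmat (R : comRingType) n m (A : 'M[R]_(n,m)) r s :
  polyfun (fun V : 'M[R]_(m,n) => tmat A V r s).
Proof.
apply: (pf_ext (@pf_sum _ _ _ _ (index_enum _) xpredT (fun (j : 'I_m) (V : 'M[R]_(m,n)) => A r j * V j s) _)).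
  by move=> j; apply: pf_mul; [apply: pf_const | apply: pf_coord].
by move=> V; rewrite /tmat mxE.
Qed.

Lemma pf_qlin (R : comRingType) m n (b : 'M[R]_m) :
  polyfun (fun V : 'M[R]_(m,n) => qlin b V).
Proof.
rewrite /qlin; apply: pf_sum => h; apply: pf_sum => k.
apply: pf_mul; first exact: pf_const.
apply: (pf_ext (@pf_sum _ _ _ _ (index_enum _) xpredT (fun j (V : 'M[R]_(m,n)) => V h j * V k j) _)).
  by move=> j; apply: pf_mul; apply: pf_coord.
by move=> V; rewrite /gram mxE; apply: eq_bigr => j _; rewrite mxE.
Qed.

Lemma pf_cramer (R : comRingType) n m (A : 'M[R]_(n,m)) Bs i :
  polyfun (fun V => cramer_num A Bs V i).
Proof.
rewrite /cramer_num; apply: pf_det => r s.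
case: (eqVneq s i) => [->|si].
  by apply: (pf_ext (@pf_qlin _ _ _ (Bs r))) => V; rewrite mxE eqxx.
by apply: (pf_ext (pf_tmat A r s)) => V; rewrite [in RHS]mxE (negPf si).
Qed.

Lemma pf_cV (R : comRingType) m n (c : 'rV[R]_m) i :
  polyfun (fun V : 'M[R]_(m,n) => (c *m V) 0 i).
Proof.
apply: (pf_ext (@pf_sum _ _ _ _ (index_enum _) xpredT (fun j (V : 'M[R]_(m,n)) => c 0 j * V j i) _)).
  by move=> j; apply: pf_mul; [apply: pf_const | apply: pf_coord].
by move=> V; rewrite mxE.
Qed.

Lemma horner_char_poly (R : comRingType) n (M : 'M[R]_n) s :
  (char_poly M).[s] = \det (s%:M - M).
Proof.
rewrite /char_poly -horner_evalE -det_map_mx; congr (\det _).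
apply/matrixP => i j; rewrite !mxE /=.
by rewrite horner_evalE; case: (i == j); rewrite /= !hornerE.
Qed.

Lemma dotrE (R : ringType) n (x y : 'rV[R]_n) : dotr x y = \sum_i x 0 i * y 0 i.
Proof. by rewrite /dotr mxE; apply: eq_bigr => i _; rewrite mxE. Qed.

Lemma keyC (R : realFieldType) n m (A : 'M[R]_(n,m)) (Bs : 'I_n -> 'M[R]_m)
  (c : 'rV[R]_m) (beta : 'M[R]_m) (A' : 'M[R]_(m,n)) :
  A *m A' = 1%:M ->
  (forall V : 'M[R]_(m, n), \det (tmat A V) != 0 ->
       dotr (solx A Bs V) (solx A Bs V) + dotr (solx A Bs V) (c *m V)
         + qlin beta V = 0) ->
  forall (l : 'rV[R]_n) (V : 'M[R]_(m,n)), l *m tmat A V = 0 ->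
    \sum_r l 0 r * qlin (Bs r) V = 0.
Proof.
move=> AA' Hyp l V lT0.
have TVs : forall s, tmat A (V + s *: A') = tmat A V + s%:M.
  by move=> s; rewrite /tmat mulmxDr -scalemxAr AA' scalemx1.
have [D HD D0] : exists2 D : {poly R},
   (forall s, D.[s] = \det (tmat A (V + s *: A'))) & D != 0.
  exists (char_poly (- tmat A V)).
    by move=> s; rewrite horner_char_poly TVs opprK addrC.
  by apply: monic_neq0; apply: char_poly_monic.
have /fin_all_exists [F HF] : forall i, exists p : {poly R}, forall s,
    cramer_num A Bs (V + s *: A') i = p.[s].
  by move=> i; apply: pf_line (@pf_cramer _ _ _ A Bs i) V A'.
have /fin_all_exists [Cp HC] : forall i, exists p : {poly R}, forall s,
    (c *m (V + s *: A')) 0 i = p.[s].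
  by move=> i; apply: pf_line (@pf_cV _ _ _ c i) V A'.
have [Q HQ] : exists p : {poly R}, forall s, qlin beta (V + s *: A') = p.[s].
  by apply: pf_line (@pf_qlin _ _ n beta) V A'.
have [Bp HB] : exists p : {poly R}, forall s,
    \sum_r l 0 r * qlin (Bs r) (V + s *: A') = p.[s].
  have pfB : polyfun (fun W : 'M[R]_(m,n) => \sum_r l 0 r * qlin (Bs r) W).
    apply: pf_sum => r; apply: pf_mul; first exact: pf_const.
    exact: pf_qlin.
  exact: pf_line pfB V A'.
have H1 : \sum_i F i ^+ 2 + D * \sum_i F i * Cp i + D ^+ 2 * Q = 0.
  apply: (poly_ae0 D0) => x Dx.
  rewrite !(hornerD, hornerM, horner_exp) !horner_sum /=.
  under eq_bigr do rewrite horner_exp -HF.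
  under [X in _ * X]eq_bigr do rewrite hornerM -HF -HC.
  rewrite -HQ HD; move: Dx; rewrite HD.
  set W := V + x *: A'; set d := \det (tmat A W) => Dx.
  have := Hyp W Dx; rewrite !dotrE => HW.
  apply: (eq_trans _ (mulr0 (d ^+ 2))); rewrite -[X in _ = _ * X]HW !mulrDr.
  congr (_ + _ + _).
  - rewrite big_distrr; apply: eq_bigr => i _; rewrite !mxE.
    by rewrite /= -expr2 -exprMn [d * _]mulrC divfK.
  - rewrite !big_distrr; apply: eq_bigr => i _; rewrite !mxE.
    rewrite /= expr2 -!mulrA; congr (_ * _).
    by rewrite mulrCA [d * (_^-1 * _)]mulrA mulfV // mul1r.
have H2 : 'X * \sum_i (l 0 i)%:P * F i = D * Bp.
  apply/eqP; rewrite -subr_eq0; apply/eqP; apply: poly_all0 => x.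
  rewrite hornerD hornerN !hornerE horner_sum HD -HB; apply/eqP; rewrite subr_eq0.
  under eq_bigr do rewrite hornerE -HF.
  set W := V + x *: A'.
  have := cramer_mul A Bs W; move/(congr1 (mulmx l)).
  rewrite mulmxA TVs mulmxDr lT0 add0r mul_mx_scalar -scalemxAl -scalemxAr.
  move/matrixP => /(_ 0 0); rewrite !mxE => H; apply/eqP.
  apply: eq_trans (eq_trans _ H) _; congr (_ * _); apply: eq_bigr => j _;
    by rewrite mxE.
have [k [E [DE E0]]] := poly_Xfactor D0.
rewrite DE in H1 H2.
have /fin_all_exists [G HG] := sos_Xpow H1.
have : 'X^k * ('X * \sum_i (l 0 i)%:P * G i) = 'X^k * (E * Bp).
  rewrite [RHS]mulrA -H2 mulrCA; congr (_ * _); rewrite big_distrr.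
  by apply: eq_bigr => i _; rewrite HG mulrCA.
move/mulfI => /(_ (expf_neq0 k (negbT (polyX_eq0 R)))) /(congr1 (fun p => p.[0])).
rewrite !hornerE => /esym /eqP; rewrite mulf_eq0 (negPf E0) /= -HB.
by rewrite scale0r addr0 => /eqP.
Qed.
Definition bil (R : comRingType) m n (b : 'M[R]_m) (X Y : 'M[R]_(m,n)) : R :=
  \tr (X^T *m (b *m Y)).

Lemma qlin_bil (R : comRingType) m n (b : 'M[R]_m) (V : 'M[R]_(m,n)) :
  qlin b V = bil b V V.
Proof.
transitivity (\sum_h \sum_k \sum_j b h k * (V h j * V k j)).
  rewrite /qlin; apply: eq_bigr => h _; apply: eq_bigr => k _.
  by rewrite /gram mxE big_distrr; apply: eq_bigr => j _; rewrite mxE.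
rewrite /bil /mxtrace.
transitivity (\sum_h \sum_j \sum_k b h k * (V h j * V k j)).
  by apply: eq_bigr => h _; rewrite exchange_big.
rewrite exchange_big; apply: eq_bigr => j _.
rewrite mxE; apply: eq_bigr => h _; rewrite !mxE big_distrr.
by apply: eq_bigr => k _; rewrite mulrCA.
Qed.

Lemma bilDl (R : comRingType) m n (b : 'M[R]_m) (X Y Z : 'M[R]_(m,n)) :
  bil b (X + Y) Z = bil b X Z + bil b Y Z.
Proof. by rewrite /bil linearD /= mulmxDl mxtraceD. Qed.

Lemma bilDr (R : comRingType) m n (b : 'M[R]_m) (X Y Z : 'M[R]_(m,n)) :
  bil b Z (X + Y) = bil b Z X + bil b Z Y.
Proof. by rewrite /bil !mulmxDr mxtraceD. Qed.

Lemma tr11 (R : comRingType) (M : 'M[R]_1) : \tr M = M 0 0.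
Proof. by rewrite /mxtrace big_ord1. Qed.

Lemma mul11 (R : comRingType) (P Q : 'M[R]_1) : (P *m Q) 0 0 = P 0 0 * Q 0 0.
Proof. by rewrite mxE big_ord1. Qed.

Lemma tr11T (R : comRingType) (M : 'M[R]_1) : M^T 0 0 = M 0 0.
Proof. by rewrite mxE. Qed.

Lemma bil_rank1 (R : comRingType) m n (b : 'M[R]_m) (X : 'M[R]_(m,n)) (u : 'cV[R]_m) (t : 'rV[R]_n) :
  bil b X (u *m t) = (t *m X^T *m b *m u) 0 0.
Proof. by rewrite /bil !mulmxA mxtrace_mulC tr11 !mulmxA. Qed.

Lemma bil_sym (R : comRingType) m n (b : 'M[R]_m) (X Y : 'M[R]_(m,n)) :
  bil b X Y = bil b^T Y X.
Proof.
by rewrite /bil -mxtrace_tr !trmx_mul trmxK mulmxA.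
Qed.

Lemma B1 (R : comRingType) m n (b : 'M[R]_m) (a : 'rV[R]_m) (u : 'cV[R]_m) :
  a *m u = 1%:M ->
  (forall X : 'M[R]_(m,n), a *m X = 0 -> qlin b X = 0) ->
  forall V : 'M[R]_(m,n), qlin b V =
    dotr (a *m V) ((u^T *m (b + b^T) - (u^T *m b *m u) 0 0 *: a) *m V).
Proof.
move=> au H V; set t := a *m V; set X := V - u *m t.
have aX : a *m X = 0 by rewrite mulmxBr mulmxA au mul1mx subrr.
have DV : V = X + u *m t by rewrite subrK.
have EX : X^T = V^T - t^T *m u^T by rewrite /X linearB /= trmx_mul.
have tT : V^T *m a^T = t^T by rewrite /t trmx_mul.
clearbody X t.
rewrite qlin_bil {1 2}DV bilDl !bilDr -[bil b X X]qlin_bil (H X aX) add0r.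
rewrite (bil_sym b (u *m t) X) !bil_rank1.
set k := (u^T *m b *m u) 0 0.
have tt : forall M : 'M[R]_m, (t *m (t^T *m u^T) *m M *m u) 0 0 = (t *m t^T) 0 0 * (u^T *m M *m u) 0 0.
  by move=> M; rewrite -mul11 !mulmxA.
have kT : (u^T *m b^T *m u) 0 0 = k.
  by rewrite /k -[in RHS]tr11T !trmx_mul !trmxK mulmxA.
have sB : forall P Q : 'M[R]_1, (P - Q) 0 0 = P 0 0 - Q 0 0 by move=> P Q; rewrite !mxE.
rewrite EX !mulmxBr !mulmxBl !sB trmx_mul !tt kT -/k.
have sD : forall P Q : 'M[R]_1, (P + Q) 0 0 = P 0 0 + Q 0 0 by move=> P Q; rewrite !mxE.
have sZ : forall (c : R) (P : 'M[R]_1), (c *: P) 0 0 = c * P 0 0 by move=> c P; rewrite !mxE.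
rewrite /dotr linearB /= mulmxBr sB -scalemxAl linearZ /= -scalemxAr sZ.
rewrite !trmx_mul trmxK tT linearD /= trmxK !mulmxA mulmxDr mulmxDl sD.
rewrite subrK mulrC addrAC addrC [RHS]addrC; congr (_ + _); exact: addrC.
Qed.

Lemma s11D (R : comRingType) (P Q : 'M[R]_1) : (P + Q) 0 0 = P 0 0 + Q 0 0.
Proof. by rewrite !mxE. Qed.
Lemma s11N (R : comRingType) (P : 'M[R]_1) : (- P) 0 0 = - P 0 0.
Proof. by rewrite !mxE. Qed.
Lemma s11Z (R : comRingType) c (P : 'M[R]_1) : (c *: P) 0 0 = c * P 0 0.
Proof. by rewrite !mxE. Qed.
Lemma s11_0 (R : comRingType) (P : 'M[R]_1) : P 0 0 = 0 -> P = 0.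
Proof. by move=> H; apply/matrixP => i j; rewrite !ord1 H mxE. Qed.

Lemma dotr_rank1 (R : comRingType) n (i0 : 'I_n) (P Q : 'M[R]_(1,1)) :
  dotr (P *m delta_mx 0 i0) (Q *m delta_mx 0 i0) = P 0 0 * Q 0 0.
Proof.
rewrite /dotr trmx_mul trmx_delta !mulmxA -(mulmxA P) mul_delta_mx.
have -> : delta_mx 0 0 = 1%:M :> 'M[R]_1 by apply/matrixP => i j; rewrite !ord1 !mxE.
by rewrite mulmx1 mul11 tr11T.
Qed.

Lemma B2 (R : numFieldType) m n (i0 : 'I_n) (ar as_ d : 'rV[R]_m) (ur us : 'cV[R]_m) :
  (ar *m ur) 0 0 = 1 -> (as_ *m us) 0 0 = 1 -> (ar *m us) 0 0 = 0 -> (as_ *m ur) 0 0 = 0 ->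
  (forall l : R, l != 0 -> forall V : 'M[R]_(m,n), (ar + l *: as_) *m V = 0 ->
     dotr (as_ *m V) (d *m V) = 0) -> d = 0.
Proof.
move=> h1 h2 h3 h4 H.
pose x (l : R) (y : 'cV[R]_m) := y + (1 - (as_ *m y) 0 0) *: us + (- l - (ar *m y) 0 0) *: ur.
have Ex : forall l, l != 0 -> forall y, (d *m x l y) 0 0 = 0.
  move=> l l0 y; have := H l l0 (x l y *m delta_mx 0 i0).
  rewrite !mulmxA !dotr_rank1.
  have Hs : (as_ *m x l y) 0 0 = 1.
    rewrite /x !mulmxDr -!scalemxAr !s11D !s11Z h2 h4 mulr1 mulr0 addr0.
    by rewrite addrCA subrr addr0.
  have Hr : ((ar + l *: as_) *m x l y) 0 0 = 0.
    rewrite mulmxDl -scalemxAl s11D s11Z Hs mulr1.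
    rewrite /x !mulmxDr -!scalemxAr !s11D !s11Z h1 h3 mulr1 mulr0 addr0.
    by rewrite addrCA subrr addr0 addNr.
  rewrite (s11_0 Hr) mul0mx Hs mul1r; exact.
pose p := (d *m us) 0 0; pose q := (d *m ur) 0 0.
have Ed : forall l y, (d *m x l y) 0 0 = (d *m y) 0 0 + (1 - (as_ *m y) 0 0) * p
                                     + (- l - (ar *m y) 0 0) * q.
  by move=> l y; rewrite /x !mulmxDr -!scalemxAr !s11D !s11Z.
have two0 : (2 : R) != 0 by rewrite pnatr_eq0.
have q0 : q = 0.
  have := Ex 1 (oner_neq0 _) 0; have := Ex 2 two0 0.
  rewrite !Ed !mulmx0 !mxE !subr0 !add0r !mul1r => E2 /eqP.
  rewrite mulN1r subr_eq0 => /eqP Ep; move: E2; rewrite Ep mulNr.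
  rewrite -{1}(mul1r q) -mulrBl => /eqP; rewrite mulf_eq0 => /orP [|/eqP //].
  by rewrite subr_eq0 (eqr_nat R 1 2).
have p0 : p = 0.
  have := Ex 1 (oner_neq0 _) 0.
  by rewrite Ed q0 !mulmx0 !mxE !subr0 !add0r !mul1r mulr0 addr0.
have dy : forall y : 'cV[R]_m, (d *m y) 0 0 = 0.
  move=> y; have := Ex 1 (oner_neq0 _) y.
  by rewrite Ed q0 p0 !mulr0 !addr0.
apply/matrixP => i j; rewrite [RHS]mxE -(dy (delta_mx j 0)).
by rewrite -colE mxE ord1.
Qed.

Lemma dotrZl (R : comRingType) n c (x y : 'rV[R]_n) : dotr (c *: x) y = c * dotr x y.
Proof. by rewrite /dotr -scalemxAl s11Z. Qed.

Lemma dotrBr (R : comRingType) n (x y z : 'rV[R]_n) : dotr x (y - z) = dotr x y - dotr x z.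
Proof. by rewrite /dotr linearB /= mulmxBr !mxE. Qed.

Lemma rowcol (R : comRingType) n m (A : 'M[R]_(n,m)) A' r s :
  A *m A' = 1%:M -> (row r A *m col s A') 0 0 = (r == s)%:R.
Proof.
move=> AA'; have E : (A *m A') r s = (1%:M : 'M[R]_n) r s by rewrite AA'.
move: E; rewrite !mxE => <-.
by apply: eq_bigr => k _; rewrite !mxE.
Qed.

Lemma sum_delta (R : comRingType) n (r : 'I_n) (f : 'I_n -> R) :
  \sum_k (delta_mx 0 r : 'rV[R]_n) 0 k * f k = f r.
Proof.
rewrite (bigD1 r) //= !mxE !eqxx /= mul1r big1 ?addr0 // => k kr.
by rewrite !mxE (negPf kr) andbF mul0r.
Qed.

Unset Implicit Arguments.
Set Strict Implicit.

Theorem mainTheorem10 (R : realFieldType) (n m : nat)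
  (A : 'M[R]_(n, m)) (Bs : 'I_n -> 'M[R]_m) :
  (0 < n)%N -> (0 < m)%N -> \rank A = n ->
  (exists (c : 'rV[R]_m) (beta : 'M[R]_m),
     forall V : 'M[R]_(m, n), \det (tmat A V) != 0 ->
       dotr (solx A Bs V) (solx A Bs V) + dotr (solx A Bs V) (c *m V)
         + qlin beta V = 0) ->
  forall i : 'I_n, exists g : 'M[R]_(m, n) -> R,
    polyfun g /\ forall V : 'M[R]_(m, n), cramer_num A Bs V i = \det (tmat A V) * g V.
Proof.
move=> n0 m0 rk [c [beta Hyp]] i.
have /row_freeP [A' AA'] : row_free A by rewrite /row_free rk.
have C := keyC AA' Hyp.
pose a r := row r A; pose u r := col r A'.
pose rho r := (u r)^T *m (Bs r + (Bs r)^T) - ((u r)^T *m Bs r *m u r) 0 0 *: a r.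
have Hq : forall r (V : 'M[R]_(m,n)), qlin (Bs r) V = dotr (a r *m V) (rho r *m V).
  move=> r; apply: B1.
    by apply/matrixP => x y; rewrite !ord1 rowcol // eqxx mxE.
  move=> X aX; rewrite -(sum_delta r (fun k => qlin (Bs k) X)); apply: C.
  by rewrite /tmat mulmxA -rowE.
have Hrs : forall r s, rho r = rho s.
  move=> r s; case: (eqVneq r s) => [-> //| rs].
  apply/eqP; rewrite eq_sym -subr_eq0; apply/eqP.
  apply: (@B2 R m n (Ordinal n0) (a r) (a s) _ (u r) (u s)).
  - by rewrite rowcol // eqxx.
  - by rewrite rowcol // eqxx.
  - by rewrite rowcol // (negPf rs).
  - by rewrite rowcol // eq_sym (negPf rs).
  move=> l l0 V HV.
  have := C (delta_mx 0 r + l *: delta_mx 0 s) V.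
  rewrite /tmat mulmxA mulmxDl -scalemxAl -!rowE HV => /(_ erefl).
  have -> : \sum_k (delta_mx 0 r + l *: delta_mx 0 s : 'rV[R]_n) 0 k * qlin (Bs k) V
            = qlin (Bs r) V + l * qlin (Bs s) V.
    rewrite -(sum_delta r (fun k => qlin (Bs k) V)) -(sum_delta s (fun k => qlin (Bs k) V)).
    rewrite big_distrr -big_split /=; apply: eq_bigr => k _.
    by rewrite !mxE mulrDl mulrA.
  have ar : a r *m V = - l *: (a s *m V).
    by apply/eqP; rewrite -subr_eq0 scaleNr opprK scalemxAl -mulmxDl HV.
  rewrite !Hq ar dotrZl mulNr addrC -mulrBr -dotrBr -mulmxBl => /eqP.
  by rewrite mulf_eq0 (negPf l0) /= => /eqP.
exists (fun V => (rho i *m V) 0 i); split; first exact: pf_cV.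
move=> V.
have Hc : \col_r qlin (Bs r) V = tmat A V *m (rho i *m V)^T.
  apply/matrixP => r j; rewrite !ord1 mxE Hq (Hrs r i) /dotr.
  by rewrite /tmat -row_mul mxE [RHS]mxE; apply: eq_bigr => k _; rewrite !mxE.
by rewrite (cramer_sol Hc) mxE.
Qed.
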